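(* Let $T$ be a decomposition tree of a distance-hereditary graph $G$, and let $v$ be an internal node of $T$ labeled $\oplus$ with left child $v_l$ and right child $v_r$, such that property (P) holds at $v_l$ and at $v_r$. Assume $\hat\alpha(v_r)>\hat\beta(v_l)$. Then $\hat\beta(v)=0$.
   Context: All graphs are finite, simple, undirected. For a graph $H$ and $S\subseteq V(H)$, $N_H[S]$ is $S$ together with all vertices adjacent to a vertex of $S$, and $H[S]$ is the induced subgraph. Graphs carry a ''twin set'': a single-vertex graph on $x$ has twin set $\{x\}$. For vertex-disjoint graphs $G_l,G_r$ with twin sets $TS(G_l),TS(G_r)$: the true twin operation $G_l\otimes G_r$ has vertex set $V(G_l)\cup V(G_r)$, edge set $E(G_l)\cup E(G_r)\cup\{uw: u\in TS(G_l), w\in TS(G_r)\}$ and twin set $TS(G_l)\cup TS(G_r)$; the false twin operation $G_l\odot G_r$ has vertex set $V(G_l)\cup V(G_r)$, edge set $E(G_l)\cup E(G_r)$, twin set $TS(G_l)\cup TS(G_r)$; the attachment operation $G_l\oplus G_r$ has the same vertex and edge sets as $G_l\otimes G_r$ and twin set $TS(G_l)$. A decomposition tree $T$ of $G$ is a rooted binary tree whose leaves are in bijection with $V(G)$, each internal node having a left and a right child and a label in $\{\otimes,\odot,\oplus\}$; for each node $v$ define $\hat G(v)$ and $\hat{TS}(v)$ recursively: for a leaf $x$, the single-vertex graph on $x$ with twin set $\{x\}$; for an internal node $v$ with label $\circ$ and children $v_l,v_r$, $\hat G(v)=\hat G(v_l)\circ\hat G(v_r)$ with the corresponding twin set; one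 requires $\hat G(\text{root})=G$. Then $\hat G(v)$ is the subgraph of $G$ induced by the set $\hat V(v)$ of leaves below $v$. For a node $u$ and $0\le k\le|\hat{TS}(u)|$, call $S\subseteq\hat V(u)$ $k$-feasible if $\hat V(u)\setminus\hat{TS}(u)\subseteq N_{\hat G(u)}[S]$ and there is $X\subseteq S\cap\hat{TS}(u)$ with $|X|=k$ such that $\hat G(u)[S\setminus X]$ has a perfect matching. $\hat\gamma_k(u)$ is the minimum size of a $k$-feasible set. $\hat{min}(u)=\min\{\hat\gamma_k(u):0\le k\le|\hat{TS}(u)|\}$, and $\hat\alpha(u)$, $\hat\beta(u)$ are the smallest and the largest $k$ with $\hat\gamma_k(u)=\hat{min}(u)$. Property (P) holds at $u$ if for every $0\le k\le|\hat{TS}(u)|$: $\hat\gamma_k(u)=\hat{min}(u)+\hat\alpha(u)-k$ when $k\le\hat\alpha(u)$; $\hat\gamma_k(u)=\hat{min}(u)+k-\hat\beta(u)$ when $k\ge\hat\beta(u)$; $\hat\gamma_k(u)=\hat{min}(u)$ when $\hat\alpha(u)<k<\hat\beta(u)$ and $k-\hat\alpha(u)$ is even; and $\hat\gamma_k(u)=\hat{min}(u)+1$ otherwise. *)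

(* Defs.v *)
From mathcomp Require Import all_boot.
Set Implicit Arguments.
Unset Strict Implicit.
Unset Printing Implicit Defensive.

(* Labels of internal nodes: true twin (otimes), false twin (odot),
   attachment (oplus). *)
Inductive dlabel := OTrue | OFalse | OAttach.

Inductive dtree (T : Type) :=
  | Leaf of T
  | Node of dlabel & dtree T & dtree T.
Arguments Leaf {T}.
Arguments Node {T}.

(* [subtree s t]: s is (the subtree rooted at) a node of t. *)
Inductive subtree (T : Type) : dtree T -> dtree T -> Prop :=
  | st_refl t : subtree t t
  | st_left s o l r : subtree s l -> subtree s (Node o l r)
  | st_right s o l r : subtree s r -> subtree s (Node o l r).

Section Defs.
Variable T : finType.

Fixpoint leaves (t : dtree T) : seq T :=
  match t with
  | Leaf x => [:: x]
  | Node _ l r => leaves l ++ leaves r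
  end.

Definition hatV (t : dtree T) : {set T} := [set x | x \in leaves t].

Fixpoint twins (t : dtree T) : {set T} :=
  match t with
  | Leaf x => [set x]
  | Node OAttach l _ => twins l
  | Node _ l r => twins l :|: twins r
  end.

Definition joins (o : dlabel) : bool := if o is OFalse then false else true.

Fixpoint tedge (t : dtree T) : rel T :=
  match t with
  | Leaf _ => fun _ _ => false
  | Node o l r => fun x y =>
      [|| tedge l x y, tedge r x y |
          joins o && (((x \in twins l) && (y \in twins r))
                      || ((y \in twins l) && (x \in twins r)))]
  end.

Definition decomp_tree (e : rel T) (t : dtree T) : Prop :=
  [/\ uniq (leaves t), (forall x, x \in leaves t) & (forall x y, e x y = tedge t x y)].

Definition has_walk (e : rel T) (A : {set T}) (u v : T) (n : nat) : bool :=
  [exists p : n.-tuple T, [&& path e u p, all (fun x => x \in A) p & last u p == v]].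

Definition distance_hereditary (e : rel T) : Prop :=
  forall (A : {set T}) (u v : T), u \in A -> v \in A ->
    (exists n, has_walk e A u v n) ->
    forall n, has_walk e setT u v n -> exists2 m, m <= n & has_walk e A u v m.

Definition has_pm (E : rel T) (A : {set T}) : bool :=
  [exists M : {set {set T}},
     [forall m in M, exists x, exists y,
        [&& x \in A, y \in A, x != y, E x y & m == [set x; y]]]
     && [forall x in A, #|[set m in M | x \in m]| == 1]].

Definition cnbh (t : dtree T) (S : {set T}) : {set T} :=
  [set x in hatV t | (x \in S) || [exists y in S, tedge t x y]].

Definition feasible (t : dtree T) (k : nat) (S : {set T}) : bool :=
  [&& S \subset hatV t, hatV t :\: twins t \subset cnbh t S &
      [exists X : {set T}, [&& X \subset S :&: twins t, #|X| == k &
                               has_pm (tedge t) (S :\: X)]]].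

(* \hat\gamma_k(u): minimum size of a k-feasible set
   (#|T|.+1 plays the role of +infinity; k-feasible sets always exist
   for 0 <= k <= |TS(u)|, so this default is never attained there). *)
Definition gamma (t : dtree T) (k : nat) : nat :=
  \big[minn/#|T|.+1]_(S : {set T} | feasible t k S) #|S|.

Definition tsize (t : dtree T) : nat := #|twins t|.

Definition hmin (t : dtree T) : nat :=
  \big[minn/#|T|.+1]_(k < (tsize t).+1) gamma t k.

Definition halpha (t : dtree T) : nat :=
  \big[minn/tsize t]_(k < (tsize t).+1 | gamma t k == hmin t) (k : nat).

Definition hbeta (t : dtree T) : nat :=
  \max_(k < (tsize t).+1 | gamma t k == hmin t) (k : nat).

Definition propP (t : dtree T) : Prop :=
  forall k, k <= tsize t ->
  [/\ k <= halpha t -> gamma t k = hmin t + (halpha t - k),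
      hbeta t <= k -> gamma t k = hmin t + (k - hbeta t),
      halpha t < k < hbeta t -> ~~ odd (k - halpha t) -> gamma t k = hmin t
    & halpha t < k < hbeta t -> odd (k - halpha t) -> gamma t k = (hmin t).+1].

End Defs.

(* Main.v *)
Require Import Defs.
From mathcomp Require Import all_boot.
From mathcomp Require Import zify.
Set Implicit Arguments. Unset Strict Implicit. Unset Printing Implicit Defensive.

Section Proof.
Variable T : finType.
Implicit Types (t l r : dtree T) (S A B X Y Z : {set T}).

Definition pmf (E : rel T) A := exists p : T -> T, forall x, x \in A ->
  [/\ p x \in A, p x != x, p (p x) = x & E x (p x)].

Lemma pmf_has_pm E A : pmf E A -> has_pm E A.
Proof.
case=> p hp; apply/existsP; exists [set [set x; p x] | x in A].
apply/andP; split.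
- apply/forallP=> m; apply/implyP=> /imsetP [x xA ->].
  case: (hp x xA)=> pA neq _ Exp.
  apply/existsP; exists x; apply/existsP; exists (p x).
  by rewrite xA pA eq_sym neq Exp eqxx.
- apply/forallP=> x; apply/implyP=> xA.
  case: (hp x xA)=> pA neq ppx Exp.
  apply/cards1P; exists [set x; p x]; apply/setP=> m.
  rewrite !inE; apply/andP/eqP.
  + case=> /imsetP [z zA ->]; rewrite !inE => /orP [/eqP->|/eqP ->] //.
    case: (hp z zA) => _ _ -> _.
    by apply/setP=> w; rewrite !inE orbC.
  + move=> ->; split; first by apply/imsetP; exists x.
    by rewrite !inE eqxx.
Qed.

Lemma has_pm_pmf E A : symmetric E -> has_pm E A -> pmf E A.
Proof.
move=> sE /existsP [M /andP [/forallP HM /forallP HA]].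
pose q x := if [pick m in M | x \in m] is Some m then
              (if [pick y in m | y != x] is Some y then y else x) else x.
have key : forall x, x \in A -> exists m, [/\ m \in M, x \in m &
     forall m', m' \in M -> x \in m' -> m' = m].
  move=> x xA; move: (HA x); rewrite xA /= => /cards1P [m0 Hm0].
  have: m0 \in [set m in M | x \in m] by rewrite Hm0 set11.
  rewrite inE => /andP [m0M xm0]; exists m0; split=> // m' m'M xm'.
  by apply/set1P; rewrite -Hm0 inE m'M xm'.
have Hq : forall x, x \in A -> exists m, exists a, exists b,
    [/\ m \in M, m = [set a; b], a != b, [/\ a \in A, b \in A & E a b] &
        [/\ x \in m, q x \in m, q x != x &
       forall m', m' \in M -> x \in m' -> m' = m]].
  move=> x xA; case: (key x xA) => m [mM xm um].
  move: (HM m); rewrite mM /= => /existsP [a /existsP [b /and5P [aA bA ab Eab /eqP mab]]].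
  exists m, a, b; split=> //.
  rewrite /q; case: pickP => [m1 /andP [m1M xm1] | H]; last first.
    by have := H m; rewrite mM xm.
  rewrite (um m1 m1M xm1).
  case: pickP => [y /andP [ym yx] | H]; first by split=> //; split=> //.
  exfalso; move: xm; rewrite mab !inE => /orP [] /eqP xE.
  + by have := H b; rewrite mab !inE eqxx orbT xE eq_sym ab.
  + by have := H a; rewrite mab !inE eqxx xE ab.
exists q => x xA.
case: (Hq x xA) => m [a [b [mM mab ab [aA bA Eab] [xm qm qx um]]]].
have qA : q x \in A.
  by move: qm; rewrite mab !inE => /orP [] /eqP ->.
have Exq : E x (q x).
  move: xm qm qx; rewrite mab !inE => /orP [] /eqP -> /orP [] /eqP ->;
  by rewrite ?eqxx // sE.
split=> //.
case: (Hq (q x) qA) => m2 [a2 [b2 [m2M _ _ _ [qm2 qqm2 qqx] um2]]].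
have e2 : m = m2 by apply: um2.
subst m2.
have H3 : forall u w z : T, u \in m -> w \in m -> z \in m -> w != u -> z != w -> z = u.
  move=> u w z; rewrite mab !inE => /orP[]/eqP-> /orP[]/eqP-> /orP[]/eqP->;
  by rewrite ?eqxx //= eq_sym (negbTE ab).
exact: H3 xm qm qqm2 qx qqx.
Qed.

Lemma hatV_node o l r : hatV (Node o l r) = hatV l :|: hatV r.
Proof. by apply/setP=> x; rewrite !inE mem_cat. Qed.

Lemma twins_sub t : twins t \subset hatV t.
Proof.
elim: t => [x|o l IHl r IHr]; first by apply/subsetP=> y; rewrite !inE.
rewrite hatV_node; case: o => /=; try by rewrite setUSS.
exact: subset_trans IHl (subsetUl _ _).
Qed.

Lemma tedge_in t x y : tedge t x y -> (x \in hatV t) && (y \in hatV t).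
Proof.
elim: t x y => [z|o l IHl r IHr] x y //=.
rewrite hatV_node !in_setU.
case/or3P => [/IHl/andP[-> ->] //|/IHr/andP[-> ->]|]; first by rewrite !orbT.
case/andP=> _ /orP [] /andP [h1 h2].
- by rewrite (subsetP (twins_sub l) _ h1) (subsetP (twins_sub r) _ h2) orbT.
- by rewrite (subsetP (twins_sub l) _ h1) (subsetP (twins_sub r) _ h2) orbT.
Qed.

Lemma tedge_sym t : symmetric (tedge t).
Proof.
elim: t => [z|o l IHl r IHr] x y //=.
by rewrite IHl IHr [X in joins o && X]orbC.
Qed.

Lemma subtree_uniq s t : subtree s t -> uniq (leaves t) -> uniq (leaves s).
Proof.
elim=> // {t} s o l r _ IH /=; rewrite cat_uniq => /and3P [? _ ?]; exact: IH.
Qed.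

Lemma node_disj o l r : uniq (leaves (Node o l r)) ->
  forall x, x \in hatV l -> x \in hatV r -> False.
Proof.
rewrite /= cat_uniq => /and3P [_ /hasPn H _] x; rewrite !inE => xl xr.
by have := H x xr; rewrite xl.
Qed.

Lemma feasP t k S : feasible t k S <->
  [/\ S \subset hatV t,
      (forall x, x \in hatV t -> x \notin twins t ->
          x \in S \/ exists2 y, y \in S & tedge t x y) &
      exists X, [/\ X \subset S :&: twins t, #|X| = k & pmf (tedge t) (S :\: X)]].
Proof.
split.
- case/and3P=> h1 /subsetP h2 /existsP [X /and3P [h3 /eqP h4 h5]]; split=> //.
  + move=> x xV xT; have := h2 x; rewrite in_setD xT xV => /(_ isT); rewrite /cnbh in_set xV /= => /orP [->|/existsP [y /andP [yS e]]].
    * by left.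
    * by right; exists y.
  + exists X; split=> //; apply: has_pm_pmf=> //; exact: tedge_sym.
- case=> h1 h2 [X [h3 h4 h5]]; apply/and3P; split=> //.
  + apply/subsetP=> x; rewrite in_setD => /andP [xT xV]; rewrite /cnbh in_set xV /=.
    case: (h2 x xV xT) => [->//|[y yS e]]; apply/orP; right; apply/existsP; exists y.
    by rewrite yS e.
  + apply/existsP; exists X; rewrite h3 h4 eqxx /=; exact: pmf_has_pm.
Qed.

Lemma pmf_mono (E E' : rel T) A : (forall x y, E x y -> E' x y) -> pmf E A -> pmf E' A.
Proof.
move=> H [p hp]; exists p => x xA; case: (hp x xA) => a b c d; split=> //; exact: H.
Qed.

Lemma pmf_union E A B : [disjoint A & B] -> pmf E A -> pmf E B -> pmf E (A :|: B).
Proof.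
move=> dAB [p hp] [q hq].
exists (fun x => if x \in A then p x else q x) => x; rewrite inE.
case xA: (x \in A) => /=; [move=> _ | move=> xB].
- case: (hp x xA) => a b c d; rewrite a c; split=> //; by rewrite inE a.
- case: (hq x xB) => a b c d.
  have qA : q x \in A = false by apply/negbTE; rewrite (disjointFl dAB) // a.
  by rewrite qA c inE a orbT; split.
Qed.

Lemma pmf_cross E Y Z (f g : T -> T) : symmetric E -> [disjoint Y & Z] ->
  (forall y, y \in Y -> [/\ f y \in Z, g (f y) = y & E y (f y)]) ->
  (forall z, z \in Z -> g z \in Y /\ f (g z) = z) -> pmf E (Y :|: Z).
Proof.
move=> sE dYZ hY hZ.
exists (fun x => if x \in Y then f x else g x) => x; rewrite inE.
case xY: (x \in Y) => /=; [move=> _ | move=> xZ].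
- case: (hY x xY) => a b c.
  have fY : f x \in Y = false by apply/negbTE; rewrite (disjointFl dYZ).
  rewrite fY b inE a orbT; split=> //.
  by apply/negP=> /eqP e; move: fY; rewrite e xY.
- case: (hZ x xZ) => a b.
  rewrite a b inE a; split=> //.
  + by apply/negP=> /eqP e; move: xY; rewrite -e a.
  + by case: (hY _ a) => _ _; rewrite b sE.
Qed.

Lemma pmf0 E : pmf E set0.
Proof. by exists id => x; rewrite inE. Qed.


Lemma bigmin_le (I : eqType) (r : seq I) (P : pred I) (F : I -> nat) N z :
  z \in r -> P z -> \big[minn/N]_(i <- r | P i) F i <= F z.
Proof.
elim: r => // a r IH; rewrite inE big_cons => /orP [/eqP <-|zr] Pz.
  by rewrite Pz geq_minl.
by case: ifP => _; [rewrite geq_min IH ?orbT | exact: IH].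
Qed.

Lemma gamma_le t k S : feasible t k S -> gamma t k <= #|S|.
Proof. by move=> h; apply: bigmin_le => //; exact: mem_index_enum. Qed.

Lemma gamma_ub t k : gamma t k <= #|T|.+1.
Proof.
rewrite /gamma; apply: (big_ind (fun n => n <= #|T|.+1)) => //.
- by move=> a b ha hb; rewrite geq_min ha.
- by move=> S _; apply: leqW; apply: max_card.
Qed.

Lemma gamma_ex t k : gamma t k <= #|T| -> exists S, feasible t k S /\ #|S| = gamma t k.
Proof.
have: gamma t k = #|T|.+1 \/ exists S, feasible t k S /\ #|S| = gamma t k.
  rewrite /gamma; apply: (big_ind (fun n => n = #|T|.+1 \/ exists S, feasible t k S /\ #|S| = n)).
  - by left.
  - move=> a b ha hb; rewrite /minn; case: ifP => _; [exact: ha|exact: hb].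
  - by move=> S fS; right; exists S.
by case=> [->|//]; rewrite ltnn.
Qed.

Lemma twins_n0 t : exists x, x \in twins t.
Proof.
elim: t => [x|o l [x IHl] r [y IHr]]; first by exists x; rewrite inE.
by exists x; case: o => //=; rewrite inE IHl.
Qed.

Lemma feas_le t k S : feasible t k S -> k <= Defs.tsize t.
Proof.
case/feasP=> _ _ [X [h1 <- _]]; apply: subset_leq_card.
exact: subset_trans h1 (subsetIr _ _).
Qed.

Lemma dom_attach l r S :
  (forall x, x \in hatV l -> x \notin twins l -> x \in S \/ exists2 y, y \in S & tedge l x y) ->
  (forall x, x \in hatV r -> x \notin twins r -> x \in S \/ exists2 y, y \in S & tedge r x y) ->
  (forall x, x \in twins r -> x \in S \/ exists2 y, y \in S & y \in twins l) ->
  forall x, x \in hatV (Node OAttach l r) -> x \notin twins (Node OAttach l r) ->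
    x \in S \/ exists2 y, y \in S & tedge (Node OAttach l r) x y.
Proof.
move=> hl hr ht x; rewrite hatV_node in_setU /= => /orP [xl|xr] xT.
- case: (hl x xl xT) => [->|[y yS e]]; [by left|right; exists y => //].
  by rewrite /= e.
- case xTr: (x \in twins r).
  + case: (ht x xTr) => [->|[y yS e]]; [by left|right; exists y => //].
    by rewrite /= e ?andbT !orbT.
  + case: (hr x xr (negbT xTr)) => [->|[y yS e]]; [by left|right; exists y => //].
    by rewrite /= e orbT.
Qed.

Lemma dom_twin o l r S : o <> OAttach ->
  (forall x, x \in hatV l -> x \notin twins l -> x \in S \/ exists2 y, y \in S & tedge l x y) ->
  (forall x, x \in hatV r -> x \notin twins r -> x \in S \/ exists2 y, y \in S & tedge r x y) ->
  forall x, x \in hatV (Node o l r) -> x \notin twins (Node o l r) ->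
    x \in S \/ exists2 y, y \in S & tedge (Node o l r) x y.
Proof.
move=> ho hl hr x; rewrite hatV_node in_setU.
have -> : twins (Node o l r) = twins l :|: twins r by case: o ho.
rewrite in_setU negb_or => /orP [xl|xr] /andP [xTl xTr].
- case: (hl x xl xTl) => [->|[y yS e]]; [by left|right; exists y => //].
  by rewrite /= e.
- case: (hr x xr xTr) => [->|[y yS e]]; [by left|right; exists y => //].
  by rewrite /= e orbT.
Qed.

Lemma mkdisj (A B : {set T}) : (forall x, x \in A -> x \in B -> False) -> [disjoint A & B].
Proof. by move=> h; apply/pred0P=> x /=; apply/negP=> /andP [a b]; exact: h a b. Qed.

Lemma sub_lift (A B : {set T}) x : A \subset B -> x \in A -> x \in B.
Proof. by move/subsetP; apply. Qed.

Lemma exist0 u : uniq (leaves u) -> exists S, feasible u 0 S.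
Proof.
elim: u => [x|o l IHl r IHr] hu.
  exists set0; apply/feasP; split; first exact: sub0set.
  - by move=> y; rewrite !inE => /eqP ->; rewrite eqxx.
  - by exists set0; rewrite setD0 cards0; split=> //; [exact: sub0set|exact: pmf0].
have [ul ur] : uniq (leaves l) /\ uniq (leaves r).
  by move: hu; rewrite /= cat_uniq => /and3P [? _ ?].
have dj := node_disj hu.
case: (IHl ul) => Sl /feasP [sl dl [Xl [_ /eqP Xl0 pl]]].
case: (IHr ur) => Sr /feasP [sr dr [Xr [_ /eqP Xr0 pr]]].
move: Xl0 Xr0; rewrite !cards_eq0 => /eqP ? /eqP ?; subst Xl Xr.
rewrite setD0 in pl; rewrite setD0 in pr.
have dlr : [disjoint Sl & Sr].
  apply/pred0P=> x /=; apply/negP=> /andP [xl xr].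
  exact: dj x (sub_lift sl xl) (sub_lift sr xr).
have pu : pmf (tedge (Node o l r)) (Sl :|: Sr).
  apply: pmf_union => //; apply: pmf_mono; try eassumption;
  by move=> x y /= ->; rewrite ?orbT.
have dl' : forall x, x \in hatV l -> x \notin twins l ->
    x \in Sl :|: Sr \/ exists2 y, y \in Sl :|: Sr & tedge l x y.
  move=> x xl xT; case: (dl x xl xT) => [h|[y yS e]]; [left|right; exists y];
  by rewrite ?inE ?h ?yS.
have dr' : forall x, x \in hatV r -> x \notin twins r ->
    x \in Sl :|: Sr \/ exists2 y, y \in Sl :|: Sr & tedge r x y.
  move=> x xl xT; case: (dr x xl xT) => [h|[y yS e]]; [left|right; exists y];
  by rewrite ?inE ?h ?yS ?orbT.
have sU : Sl :|: Sr \subset hatV (Node o l r) by rewrite hatV_node setUSS.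
case: o hu dj pu sU => hu dj pu sU.
- exists (Sl :|: Sr); apply/feasP; split=> //; first exact: dom_twin.
  by exists set0; rewrite setD0 cards0; split=> //; exact: sub0set.
- exists (Sl :|: Sr); apply/feasP; split=> //; first exact: dom_twin.
  by exists set0; rewrite setD0 cards0; split=> //; exact: sub0set.
case: (boolP [exists x, (x \in Sl) && (x \in twins l)]) => [/existsP [x0 /andP [x0S x0T]]|hn].
  exists (Sl :|: Sr); apply/feasP; split=> //.
  - apply: dom_attach=> // x _; right; exists x0 => //; by rewrite inE x0S.
  - by exists set0; rewrite setD0 cards0; split=> //; exact: sub0set.
case: (boolP (twins r \subset Sr)) => [hsub|].
  exists (Sl :|: Sr); apply/feasP; split=> //.
  - apply: dom_attach=> // x xT; left; by rewrite inE (sub_lift hsub xT) orbT.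
  - by exists set0; rewrite setD0 cards0; split=> //; exact: sub0set.
case/subsetPn=> y0 y0T y0S.
case: (twins_n0 l) => x0 x0T.
have x0S : x0 \notin Sl.
  by apply/negP=> h; move/existsP: hn; apply; exists x0; rewrite h x0T.
have x0l := sub_lift (twins_sub l) x0T.
have y0r := sub_lift (twins_sub r) y0T.
exists ((Sl :|: Sr) :|: ([set y0] :|: [set x0])); apply/feasP; split.
- rewrite hatV_node !subUset !sub1set !in_setU x0l y0r orbT /=.
  by rewrite (subset_trans sl (subsetUl _ _)) (subset_trans sr (subsetUr _ _)).
- apply: dom_attach.
  + move=> x xl xT; case: (dl' x xl xT) => [h|[y yS e]]; [left|right; exists y] => //;
    by rewrite inE ?h ?yS.
  + move=> x xl xT; case: (dr' x xl xT) => [h|[y yS e]]; [left|right; exists y] => //;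
    by rewrite inE ?h ?yS.
  + by move=> x _; right; exists x0 => //; rewrite !inE eqxx !orbT.
- exists set0; rewrite setD0 cards0; split=> //; first exact: sub0set.
  apply: pmf_union => //.
  + apply: mkdisj => x; rewrite !inE => /orP [xl|xr] /orP [] /eqP e; subst x.
    * exact: dj y0 (sub_lift sl xl) y0r.
    * by rewrite xl in x0S.
    * by rewrite xr in y0S.
    * exact: dj x0 x0l (sub_lift sr xr).
  + apply: (@pmf_cross _ _ _ (fun _ => x0) (fun _ => y0)).
    * exact: tedge_sym.
    * apply: mkdisj => x; rewrite !inE => /eqP -> /eqP e; subst y0.
      exact: dj x0 x0l y0r.
    * by move=> y; rewrite !inE => /eqP ->; rewrite eqxx /= y0T x0T !orbT.
    * by move=> z; rewrite !inE => /eqP ->; rewrite eqxx.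
Qed.


Section Attach.
Variables l r : dtree T.
Hypothesis hu : uniq (leaves (Node OAttach l r)).

Let dj := node_disj hu.

Lemma Vv x : (x \in hatV (Node OAttach l r)) = (x \in hatV l) || (x \in hatV r).
Proof. by rewrite hatV_node in_setU. Qed.

Lemma TSl x : x \in twins l -> x \in hatV l.
Proof. exact: sub_lift (twins_sub l). Qed.
Lemma TSr x : x \in twins r -> x \in hatV r.
Proof. exact: sub_lift (twins_sub r). Qed.

Lemma E1 x y : tedge (Node OAttach l r) x y -> x \in hatV l -> y \in hatV l -> tedge l x y.
Proof.
move=> /= /or3P [//| /tedge_in /andP [xr _] xl _|]; first by case: (dj xl xr).
move=> /orP [] /andP [h1 h2] xl yl.
- by case: (dj yl (TSr h2)).
- by case: (dj xl (TSr h2)).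
Qed.

Lemma E2 x y : tedge (Node OAttach l r) x y -> x \in hatV r -> y \in hatV r -> tedge r x y.
Proof.
move=> /= /or3P [/tedge_in /andP [xl _] xr _|//|]; first by case: (dj xl xr).
move=> /orP [] /andP [h1 h2] xr yr.
- by case: (dj (TSl h1) xr).
- by case: (dj (TSl h1) yr).
Qed.

Lemma E3 x y : tedge (Node OAttach l r) x y -> x \in hatV l -> y \in hatV r ->
  x \in twins l /\ y \in twins r.
Proof.
move=> /= /or3P [/tedge_in /andP [_ yl] xl yr|/tedge_in /andP [xr _] xl yr|].
- by case: (dj yl yr).
- by case: (dj xl xr).
move=> /orP [] /andP [h1 h2] xl yr //.
by case: (dj (TSl h1) yr).
Qed.

Lemma decomp k S : feasible (Node OAttach l r) k S ->
  exists c, feasible l (k + c) (S :&: hatV l) /\ feasible r c (S :&: hatV r).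
Proof.
case/feasP => sS dS [X [sX cX [p hp]]].
have hS : forall x, x \in S -> (x \in hatV l) || (x \in hatV r).
  by move=> x xS; rewrite -Vv (sub_lift sS xS).
have hX : forall x, x \in X -> [/\ x \in S, x \in twins l & x \in hatV l].
  move=> x xX; move: (sub_lift sX xX); rewrite in_setI /= => /andP [a b].
  by split=> //; exact: TSl.
have hp' : forall x, x \in S -> x \notin X ->
    [/\ p x \in S, p x \notin X, p x != x, p (p x) = x & tedge (Node OAttach l r) x (p x)].
  move=> x xS xX; have : x \in S :\: X by rewrite in_setD xS xX.
  by case/hp; rewrite in_setD => /andP [a b] c d e; split.
pose L := [set x in (S :&: hatV l) :\: X | p x \in hatV r].
pose Y := [set y in S :&: hatV r | p y \in hatV l].
have Lm : forall x, (x \in L) = [&& x \in S, x \in hatV l, x \notin X & p x \in hatV r].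
  move=> x; rewrite /L in_set in_setD in_setI.
  by case: (x \in S); case: (x \in X); case: (x \in hatV l).
have Ym : forall x, (x \in Y) = [&& x \in S, x \in hatV r & p x \in hatV l].
  move=> x; rewrite /Y in_set in_setI.
  by case: (x \in S); case: (x \in hatV r).
have XnotR : forall x, x \in hatV r -> x \notin X.
  by move=> x xr; apply/negP=> /hX [_ _ xl]; exact: dj xl xr.
exists #|Y|; split; apply/feasP; split.
- exact: subsetIr.
- move=> x xl xT.
  case: (dS x); [by rewrite Vv xl | by [] | by move=> h; left; rewrite in_setI h xl |].
  case=> y yS e; move: (hS y yS) => /orP [yl|yr].
  + by right; exists y; [rewrite in_setI yS yl | exact: E1 e xl yl].
  + by case: (E3 e xl yr) => h _; rewrite h in xT.
- exists (X :|: L); split.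
  + apply/subsetP=> x; rewrite in_setU Lm => /orP [/hX [a b c]|/and4P [a b c d]].
    * by rewrite !in_setI a b c.
    * case: (hp' x a c) => _ _ _ _ e.
      by case: (E3 e b d) => h _; rewrite !in_setI a b h.
  + have dXL : X :&: L = set0.
      apply/setP=> x; rewrite in_setI Lm in_set0.
      by case: (x \in X); rewrite ?andbF.
    have <- : #|L| = #|Y|.
      have -> : Y = p @: L.
        apply/setP=> y; rewrite Ym; apply/and3P/imsetP.
        * case=> yS yr pyl.
          case: (hp' y yS (XnotR y yr)) => a b c d _.
          by exists (p y); [rewrite Lm a pyl b d yr | rewrite d].
        * case=> x; rewrite Lm => /and4P [a b c d] ->.
          case: (hp' x a c) => a' b' c' d' _.
          by split=> //; rewrite d'.
      apply/esym/card_in_imset=> x1 x2; rewrite !Lm => /and4P [a b c d] /and4P [a2 b2 c2 d2] e.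
      case: (hp' x1 a c) => _ _ _ h1 _; case: (hp' x2 a2 c2) => _ _ _ h2 _.
      by rewrite -h1 e h2.
    by rewrite -cX -cardsUI dXL cards0 addn0.
  + exists p => x; rewrite !in_setD in_setU in_setI negb_or Lm => /andP [/andP [xX]].
    rewrite xX /= => xL /andP [xS xl].
    rewrite xS xl /= in xL.
    case: (hp' x xS xX) => a b c d e.
    have pxl : p x \in hatV l by move: (hS _ a); rewrite (negbTE xL) orbF.
    have xr : (x \in hatV r) = false by apply/negP => /(dj xl).
    rewrite in_setU Lm in_setI a pxl (negbTE b) d xr /=; split=> //.
    exact: E1 e xl pxl.
- exact: subsetIr.
- move=> x xr xT.
  case: (dS x); [by rewrite Vv xr orbT | by apply/negP => /TSl xl; exact: dj xl xr
                | by move=> h; left; rewrite in_setI h xr |].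
  case=> y yS e; move: (hS y yS) => /orP [yl|yr].
  + by rewrite tedge_sym in e; case: (E3 e yl xr) => _ h; rewrite h in xT.
  + by right; exists y; [rewrite in_setI yS yr | exact: E2 e xr yr].
- exists Y; split=> //.
  + apply/subsetP=> y; rewrite Ym => /and3P [a b c].
    case: (hp' y a (XnotR y b)) => _ _ _ _ e.
    rewrite tedge_sym in e.
    by case: (E3 e c b) => _ h; rewrite !in_setI a b h.
  + exists p => x; rewrite !in_setD in_setI Ym => /andP [xY /andP [xS xr]].
    rewrite xS xr /= in xY.
    case: (hp' x xS (XnotR x xr)) => a b c d e.
    have pxr : p x \in hatV r by move: (hS _ a); rewrite (negbTE xY).
    have xl : (x \in hatV l) = false by apply/negP => /dj /(_ xr).
    rewrite in_setI Ym a pxr d xl /=; split=> //.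
    exact: E2 e xr pxr.
Qed.


Lemma compose j c Sl Sr : feasible l j Sl -> feasible r c Sr -> c <= j -> 0 < j ->
  feasible (Node OAttach l r) (j - c) (Sl :|: Sr).
Proof.
case/feasP => sl dl [Xl [sXl cXl pl]].
case/feasP => sr dr [Y [sY cY pr]] cj j0.
have hXl : forall x, x \in Xl -> [/\ x \in Sl, x \in twins l & x \in hatV l].
  move=> x xX; move: (sub_lift sXl xX); rewrite in_setI => /andP [a b].
  by split=> //; exact: TSl.
have hY : forall x, x \in Y -> [/\ x \in Sr, x \in twins r & x \in hatV r].
  move=> x xX; move: (sub_lift sY xX); rewrite in_setI => /andP [a b].
  by split=> //; exact: TSr.
have [x0 x0X] : exists x0, x0 \in Xl by apply/card_gt0P; rewrite cXl.
pose eX := enum Xl; pose eY := enum Y.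
have seX : size eX = j by rewrite -cXl cardE.
have seY : size eY = c by rewrite -cY cardE.
pose f y := nth x0 eX (index y eY).
pose g z := nth x0 eY (index z eX).
pose Z := [set z in Xl | index z eX < c].
have Zm : forall z, (z \in Z) = (z \in Xl) && (index z eX < c).
  by move=> z; rewrite /Z in_set.
have hf : forall y, y \in Y -> [/\ f y \in Z, g (f y) = y & f y \in Xl].
  move=> y yY.
  have iy : index y eY < c by rewrite -seY index_mem mem_enum.
  have iy' : index y eY < size eX by rewrite seX (leq_trans iy cj).
  have fX : f y \in eX by apply: mem_nth.
  have ify : index (f y) eX = index y eY by rewrite /f index_uniq // enum_uniq.
  rewrite mem_enum in fX.
  by rewrite Zm fX ify iy /g ify nth_index // mem_enum.
have hg : forall z, z \in Z -> g z \in Y /\ f (g z) = z.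
  move=> z; rewrite Zm => /andP [zX iz].
  have iz' : index z eX < size eY by rewrite seY.
  have gY : g z \in eY by apply: mem_nth.
  have igz : index (g z) eY = index z eX by rewrite /g index_uniq // enum_uniq.
  rewrite mem_enum in gY.
  by rewrite gY /f igz nth_index // mem_enum.
have ZX : forall z, z \in Z -> z \in Xl by move=> z; rewrite Zm => /andP [].
have cZ : #|Z| = c.
  have -> : Z = f @: Y.
    apply/setP=> z; apply/idP/imsetP.
    - by move=> zZ; case: (hg z zZ) => a b; exists (g z).
    - by case=> y yY ->; case: (hf y yY).
  rewrite card_in_imset // => y1 y2 h1 h2 e.
  by case: (hf y1 h1) => _ e1 _; case: (hf y2 h2) => _ e2 _; rewrite -e1 e e2.
apply/feasP; split.
- by rewrite hatV_node setUSS.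
- apply: dom_attach.
  + move=> x xl xT; case: (dl x xl xT) => [h|[y yS e]]; [left|right; exists y] => //;
    by rewrite in_setU ?h ?yS.
  + move=> x xl xT; case: (dr x xl xT) => [h|[y yS e]]; [left|right; exists y] => //;
    by rewrite in_setU ?h ?yS ?orbT.
  + move=> x _; right; exists x0; case: (hXl x0 x0X) => // a _ _.
    by rewrite in_setU a.
- exists (Xl :\: Z); split.
  + apply/subsetP=> x; rewrite in_setD => /andP [_ /hXl [a b _]].
    by rewrite in_setI in_setU a b.
  + have XZ : Xl :&: Z = Z by apply/setIidPr/subsetP.
    by rewrite cardsD cXl XZ cZ.
  + have -> : (Sl :|: Sr) :\: (Xl :\: Z) = ((Sl :\: Xl) :|: (Sr :\: Y)) :|: (Y :|: Z).
      apply/setP=> x; rewrite !in_setD !in_setU !in_setD.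
      case xZ: (x \in Z).
        by have [a _ _] := hXl x (ZX x xZ); rewrite a ZX ?orbT.
      case xY: (x \in Y).
        have [a _ xr] := hY x xY.
        have -> : (x \in Xl) = false by apply/negP=> /hXl [_ _ xl]; exact: dj xl xr.
        by rewrite a !orbT.
      case xSr: (x \in Sr).
        have -> : (x \in Xl) = false.
          by apply/negP=> /hXl [_ _ xl]; exact: dj xl (sub_lift sr xSr).
        by rewrite !orbT.
      by rewrite /= !orbF.
    apply: pmf_union.
    * apply: mkdisj => x; rewrite !in_setU !in_setD.
      move=> /orP [/andP [xX xS]|/andP [xY xS]] /orP [yY|zZ].
      - by have [_ _ xr] := hY x yY; exact: dj (sub_lift sl xS) xr.
      - by rewrite ZX in xX.
      - by rewrite yY in xY.
      - by have [_ _ xl] := hXl x (ZX x zZ); exact: dj xl (sub_lift sr xS).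
    * apply: pmf_union.
      - apply: mkdisj => x; rewrite !in_setD => /andP [_ a] /andP [_ b].
        exact: dj (sub_lift sl a) (sub_lift sr b).
      - by apply: pmf_mono pl => x y /= ->.
      - by apply: pmf_mono pr => x y /= ->; rewrite orbT.
    * apply: (pmf_cross (f := f) (g := g)).
      - exact: tedge_sym.
      - apply: mkdisj => x xY xZ.
        by have [_ _ xr] := hY x xY; have [_ _ xl] := hXl x (ZX x xZ); exact: dj xl xr.
      - move=> y yY; case: (hf y yY) => a b c'; split=> //.
        have [_ yT _] := hY y yY; have [_ fT _] := hXl _ c'.
        by rewrite /= yT fT !orbT.
      - exact: hg.
Qed.


Lemma alpha_le t : halpha t <= Defs.tsize t.
Proof.
rewrite /halpha; apply: (big_ind (fun n => n <= Defs.tsize t)) => //.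
- by move=> a b ha hb; rewrite geq_min ha.
- by move=> i _; rewrite -ltnS.
Qed.

Lemma step k : propP l -> propP r -> hbeta l < halpha r -> 0 < k ->
  gamma (Node OAttach l r) k <= #|T| ->
  gamma (Node OAttach l r) k.-1 < gamma (Node OAttach l r) k.
Proof.
move=> Pl Pr hab k0 hk.
case: (gamma_ex hk) => S [fS cS].
have [sS _ _] := iffLR (feasP _ _ _) fS.
case: (decomp fS) => c [fl fr].
have cS' : #|S| = #|S :&: hatV l| + #|S :&: hatV r|.
  have e1 : S = (S :&: hatV l) :|: (S :&: hatV r).
    by rewrite -setIUr -(hatV_node OAttach); apply/esym/setIidPl.
  have e2 : (S :&: hatV l) :&: (S :&: hatV r) = set0.
    apply/setP=> x; rewrite !in_setI in_set0.
    apply/negP=> /andP [/andP [_ a] /andP [_ b]]; exact: dj a b.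
  by rewrite {1}e1 -cardsUI e2 cards0 addn0.
have jl := feas_le fl; have cr := feas_le fr.
have gl := gamma_le fl; have gr := gamma_le fr.
have aler := alpha_le r.
case: (ltnP c (halpha r)) => hc.
- have [h1 _ _ _] := Pr c cr.
  have [h2 _ _ _] := Pr c.+1 (leq_trans hc aler).
  have e1 := h1 (ltnW hc); have e2 := h2 hc.
  have lt : gamma r c.+1 < gamma r c by rewrite e1 e2; lia.
  have hT : gamma r c.+1 <= #|T|.
    by have := max_card (mem (S :&: hatV r)); lia.
  case: (gamma_ex hT) => Sr' [fr' cr'].
  have fv := compose fl fr' (ltac:(lia)) (ltac:(lia)).
  have -> : k.-1 = k + c - c.+1 by lia.
  apply: leq_ltn_trans (gamma_le fv) _.
  apply: leq_ltn_trans (leq_card_setU _ _) _.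
  rewrite -cS cS'; lia.
- have b1 : hbeta l <= k + c by lia.
  have b2 : hbeta l <= (k + c).-1 by lia.
  have [_ h1 _ _] := Pl (k + c) jl.
  have [_ h2 _ _] := Pl (k + c).-1 (leq_trans (leq_pred _) jl).
  have e1 := h1 b1; have e2 := h2 b2.
  have lt : gamma l (k + c).-1 < gamma l (k + c) by rewrite e1 e2; lia.
  have hT : gamma l (k + c).-1 <= #|T|.
    by have := max_card (mem (S :&: hatV l)); lia.
  case: (gamma_ex hT) => Sl' [fl' cl'].
  have fv := compose fl' fr (ltac:(lia)) (ltac:(lia)).
  have -> : k.-1 = (k + c).-1 - c by lia.
  apply: leq_ltn_trans (gamma_le fv) _.
  apply: leq_ltn_trans (leq_card_setU _ _) _.
  rewrite -cS cS'; lia.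
Qed.

End Attach.
End Proof.

Theorem lemma40 (T : finType) (e : rel T) (t vl vr : dtree T) :
  symmetric e -> irreflexive e -> distance_hereditary e ->
  decomp_tree e t ->
  subtree (Node OAttach vl vr) t ->
  propP vl -> propP vr ->
  hbeta vl < halpha vr ->
  hbeta (Node OAttach vl vr) = 0.
Proof.
move=> _ _ _ [ut _ _] st Pl Pr hab.
have hu := subtree_uniq st ut.
have g0 : gamma (Node OAttach vl vr) 0 <= #|T|.
  case: (exist0 hu) => S fS; apply: leq_trans (gamma_le fS) _; exact: max_card.
have hm : forall k, k <= Defs.tsize (Node OAttach vl vr) ->
    hmin (Node OAttach vl vr) <= gamma (Node OAttach vl vr) k.
  move=> k hk; rewrite /hmin.
  apply: (@bigmin_le _ _ _ (fun i : 'I_(Defs.tsize (Node OAttach vl vr)).+1 => gamma (Node OAttach vl vr) i) _ (Ordinal (hk : k < _.+1))) => //.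
  exact: mem_index_enum.
apply/eqP; rewrite -leqn0; apply/bigmax_leqP => k /eqP hk.
case: (posnP k) => [-> //|k0].
have kle : (k : nat) <= Defs.tsize (Node OAttach vl vr) by rewrite -ltnS.
have h0 := hm 0 (leq0n _).
have hk1 := hm k.-1 (leq_trans (leq_pred _) kle).
have := step hu Pl Pr hab k0 (ltac:(lia)).
lia.
Qed.
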